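(* Let $\mathcal{H}$ be a Hilbert space, let $V\in\mathcal{B}(\mathcal{H})$ be a unilateral shift (i.e. a pure isometry), and let $X\in\mathcal{B}(\mathcal{H})$ satisfy $$\sup_{n\ge0}\Big\|\sum_{j=0}^{n}\big(V^{j+1}XV^{j}-V^{*\,j}XV^{*\,j+1}\big)\Big\|<\infty.$$ Then the equation $X=V^*Z-ZV$ has a bounded solution $Z\in\mathcal{B}(\mathcal{H})$.
   Context: A pure isometry is an isometry $V$ with no nonzero reducing subspace on which it is unitary; equivalently $V^{*n}\to0$ strongly. *)

(* Defs.v *)
From HB Require Import structures.
From mathcomp Require Import all_boot all_order all_algebra.
From mathcomp Require Import reals complex.
Set Implicit Arguments. Unset Strict Implicit. Unset Printing Implicit Defensive.
Import Order.TTheory GRing.Theory Num.Theory.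
Local Open Scope ring_scope.
Local Open Scope complex_scope.

Record hilbert (R : realType) := Hilbert {
  hcar :> lmodType R[i];
  hinner : hcar -> hcar -> R[i];
  hinnerD : forall x y z, hinner (x + y) z = hinner x z + hinner y z;
  hinnerZ : forall (a : R[i]) x y, hinner (a *: x) y = a * hinner x y;
  hinnerC : forall x y, hinner y x = (hinner x y)^*;
  hinner_ge0 : forall x, 0 <= hinner x x;
  hinner_eq0 : forall x, hinner x x = 0 -> x = 0;
  hcomplete : forall u : nat -> hcar,
    (forall e : R, 0 < e -> exists N, forall m n, (N <= m)%N -> (N <= n)%N ->
        Num.sqrt (complex.Re (hinner (u m - u n) (u m - u n))) < e) ->
    exists l, forall e : R, 0 < e -> exists N, forall n, (N <= n)%N ->
        Num.sqrt (complex.Re (hinner (u n - l) (u n - l))) < e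
}.

Section Ops.
Variables (R : realType) (H : hilbert R).

Definition hnorm (x : H) : R := Num.sqrt (complex.Re (hinner x x)).

Definition bounded_op (T : H -> H) : Prop :=
  (forall x y, T (x + y) = T x + T y) /\
  (forall (a : R[i]) x, T (a *: x) = a *: T x) /\
  (exists M : R, forall x, hnorm (T x) <= M * hnorm x).

Definition is_adjoint (T S : H -> H) : Prop :=
  forall x y, hinner (T x) y = hinner x (S y).

Definition isometry (V : H -> H) : Prop := forall x, hnorm (V x) = hnorm x.

(* pure isometry (unilateral shift), in the form V^{*n} -> 0 strongly,
   where Vs is the adjoint of V *)
Definition pure_isometry (V Vs : H -> H) : Prop :=
  isometry V /\
  forall x, forall e : R, 0 < e -> exists N, forall n, (N <= n)%N ->
     hnorm (iter n Vs x) < e.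

End Ops.

(* Main.v *)
Require Import Defs.
From HB Require Import structures.
From mathcomp Require Import all_boot all_order all_algebra.
From mathcomp Require Import reals complex.
From mathcomp Require Import ring lra zify.
From Stdlib Require ClassicalEpsilon.
From mathcomp Require classical_sets.
Import Order.TTheory GRing.Theory Num.Theory.
Local Open Scope ring_scope.
Local Open Scope complex_scope.
Set Implicit Arguments. Unset Strict Implicit.

Section Basic.
Variables (R : realType) (H : hilbert R).
Local Notation ip := (@hinner R H).
Definition nsq (x : H) : R := complex.Re (ip x x).

Lemma ReD (a b : R[i]) : complex.Re (a + b) = complex.Re a + complex.Re b.
Proof. by case: a; case: b. Qed.
Lemma ReN (a : R[i]) : complex.Re (- a) = - complex.Re a.
Proof. by case: a. Qed.
Lemma ReJ (a : R[i]) : complex.Re (conjc a) = complex.Re a.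
Proof. by case: a. Qed.

Lemma ip_addr x y z : ip x (y + z) = ip x y + ip x z.
Proof. by rewrite hinnerC hinnerD rmorphD /= -!hinnerC. Qed.
Lemma ip_scaler (a : R[i]) x y : ip x (a *: y) = conjc a * ip x y.
Proof. by rewrite hinnerC hinnerZ rmorphM /= -hinnerC. Qed.
Lemma ip0l y : ip 0 y = 0.
Proof. by rewrite -(scale0r (0:H)) hinnerZ mul0r. Qed.
Lemma ip0r y : ip y 0 = 0.
Proof. by rewrite hinnerC ip0l conjc0. Qed.
Lemma ip_oppl x y : ip (- x) y = - ip x y.
Proof. by apply/eqP; rewrite -subr_eq0 opprK -hinnerD addNr ip0l. Qed.
Lemma ip_oppr x y : ip x (- y) = - ip x y.
Proof. by rewrite hinnerC ip_oppl rmorphN /= -hinnerC. Qed.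
Lemma ip_subl x y z : ip (x - y) z = ip x z - ip y z.
Proof. by rewrite hinnerD ip_oppl. Qed.
Lemma ip_subr x y z : ip x (y - z) = ip x y - ip x z.
Proof. by rewrite ip_addr ip_oppr. Qed.

Lemma nsq_ge0 x : 0 <= nsq x.
Proof. by have := hinner_ge0 x; rewrite lecE /= => /andP[_]. Qed.
Lemma ip_real x : ip x x = (nsq x)%:C.
Proof. have := hinner_ge0 x; rewrite lecE /= => /andP[/eqP h _].
rewrite /nsq; case: (ip x x) h => a b /= ->; done. Qed.
Lemma nsq_eq0 x : nsq x = 0 -> x = 0.
Proof. by move=> h; apply: hinner_eq0; rewrite ip_real h. Qed.
Lemma nsq0 : nsq 0 = 0.
Proof. by rewrite /nsq ip0l. Qed.
Lemma nsqD x y : nsq (x + y) = nsq x + nsq y + 2 * complex.Re (ip x y).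
Proof.
rewrite /nsq hinnerD !ip_addr !ReD (hinnerC y x) ReJ; lra.
Qed.
Lemma nsqN x : nsq (- x) = nsq x.
Proof. by rewrite /nsq ip_oppl ip_oppr opprK. Qed.
Lemma nsqB x y : nsq (x - y) = nsq x + nsq y - 2 * complex.Re (ip x y).
Proof. by rewrite nsqD nsqN ip_oppr ReN; lra. Qed.
Lemma nsqZr (t : R) x : nsq (t%:C *: x) = t ^+ 2 * nsq x.
Proof. rewrite /nsq hinnerZ ip_scaler ip_real /=.
by rewrite !(mulr0,mul0r,subr0,oppr0) expr2 mulrA. Qed.

Lemma ReMr (t : R) (z : R[i]) : complex.Re (t%:C * z) = t * complex.Re z.
Proof. by case: z => a b /=; rewrite mul0r subr0. Qed.
Lemma ip_scaler_real (t : R) x y : ip x (t%:C *: y) = t%:C * ip x y.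
Proof. by rewrite ip_scaler /conjc /= oppr0. Qed.

Lemma hnorm_ge0 (x : H) : 0 <= hnorm x.
Proof. exact: sqrtr_ge0. Qed.
Lemma hnorm_sq x : hnorm (x : H) ^+ 2 = nsq x.
Proof. by rewrite /hnorm sqr_sqrtr // nsq_ge0. Qed.
Lemma hnorm0 : hnorm (0 : H) = 0.
Proof. by rewrite /hnorm -/(nsq 0) nsq0 sqrtr0. Qed.
Lemma hnormN (x : H) : hnorm (- x) = hnorm x.
Proof. by rewrite /hnorm -!/(nsq _) nsqN. Qed.
Lemma hnormB x y : hnorm ((x : H) - y) = hnorm (y - x).
Proof. by rewrite -hnormN opprB. Qed.
Lemma hnorm_eq0 x : hnorm x = 0 -> (x : H) = 0.
Proof. by move=> h; apply: nsq_eq0; rewrite -hnorm_sq h expr0n. Qed.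

Lemma CS_Re x y : complex.Re (ip x y) <= hnorm (x : H) * hnorm y.
Proof.
set c := complex.Re (ip x y).
have key : forall t : R, 0 <= nsq x + t ^+ 2 * nsq y + 2 * t * c.
  move=> t; have := nsq_ge0 (x + t%:C *: y).
  by rewrite nsqD nsqZr ip_scaler_real ReMr -/c mulrA.
have hx := hnorm_ge0 x; have hy := hnorm_ge0 y.
have sx := hnorm_sq x; have sy := hnorm_sq y.
have [c0|cpos] := lerP c 0; first by apply: le_trans c0 _; rewrite mulr_ge0.
have [y0|ypos] := eqVneq (nsq y) 0.
  by move: cpos; rewrite /c (nsq_eq0 y0) ip0r /= ltxx.
have yp : 0 < nsq y by rewrite lt_neqAle eq_sym ypos nsq_ge0.
have := key (- c / nsq y).
have -> : nsq x + (- c / nsq y) ^+ 2 * nsq y + 2 * (- c / nsq y) * c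
   = nsq x - c ^+ 2 / nsq y.
  by field; rewrite gt_eqF.
rewrite subr_ge0 ler_pdivrMr // => h.
rewrite -sx -sy -exprMn in h.
have p := mulr_ge0 hx hy; move: h p cpos.
move: (hnorm x * hnorm y) => p h p0 c0.
rewrite leNgt; apply/negP => hp.
have : p ^+ 2 < c ^+ 2 by rewrite ltr_pXn2r // ?nnegrE ?ltW.
lra.
Qed.

Lemma hnormD x y : hnorm (x + y) <= hnorm (x : H) + hnorm y.
Proof.
have := CS_Re x y; have := hnorm_sq (x + y); rewrite nsqD -!hnorm_sq.
have := hnorm_ge0 x; have := hnorm_ge0 y; have := hnorm_ge0 (x + y).
nra.
Qed.
Lemma hnormB_le x y : hnorm (x - y) <= hnorm (x : H) + hnorm y.
Proof. by rewrite -(hnormN y) hnormD. Qed.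
Lemma hnorm_tri x y z : hnorm (x - z) <= hnorm ((x : H) - y) + hnorm (y - z).
Proof. have -> : x - z = (x - y) + (y - z) by rewrite addrA subrK. exact: hnormD. Qed.

Lemma nsqZ (a : R[i]) (x : H) :
  nsq (a *: x) = (complex.Re a ^+ 2 + complex.Im a ^+ 2) * nsq x.
Proof. rewrite /nsq hinnerZ ip_scaler ip_real -/(nsq x).
by case: a => a b /=; rewrite !(mulr0,mul0r,subr0,oppr0,addr0) !expr2; ring. Qed.
Lemma hnormZ (a : R[i]) (x : H) :
  hnorm (a *: x) = Num.sqrt (complex.Re a ^+ 2 + complex.Im a ^+ 2) * hnorm x.
Proof. by rewrite /hnorm -!/(nsq _) nsqZ sqrtrM // addr_ge0 // sqr_ge0. Qed.

Definition hcvg (u : nat -> H) (l : H) := forall e : R, 0 < e ->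
  exists N, forall n, (N <= n)%N -> hnorm (u n - l) < e.

Lemma small_eq0 (r : R) : 0 <= r -> (forall e, 0 < e -> r < e) -> r = 0.
Proof. move=> r0 h; apply/eqP; rewrite eq_le r0 andbT.
rewrite leNgt; apply/negP => rp; by have := h r rp; rewrite ltxx. Qed.
Lemma le_small (r c : R) : (forall e, 0 < e -> r < c + e) -> r <= c.
Proof. move=> h; rewrite leNgt; apply/negP => rc.
have := h ((r - c) / 2); rewrite divr_gt0 ?subr_gt0 // => /(_ isT); lra. Qed.

Lemma hcvg_unique u l1 l2 : hcvg u l1 -> hcvg u l2 -> l1 = l2.
Proof.
move=> h1 h2; apply/eqP; rewrite -subr_eq0; apply/eqP/hnorm_eq0.
apply: small_eq0; first exact: hnorm_ge0.
move=> e e0; have e2 : 0 < e / 2 by rewrite divr_gt0.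
have [N1 H1] := h1 _ e2; have [N2 H2] := h2 _ e2.
have := H1 (maxn N1 N2) (leq_maxl _ _); have := H2 (maxn N1 N2) (leq_maxr _ _).
have := hnorm_tri l1 (u (maxn N1 N2)) l2; rewrite hnormB; lra.
Qed.

Lemma hcvg_ev u v l : (exists N, forall n, (N <= n)%N -> u n = v n) ->
  hcvg u l -> hcvg v l.
Proof. move=> [M HM] h e e0; have [N HN] := h e e0; exists (maxn M N) => n hn.
rewrite -HM; first by apply: HN; apply: leq_trans hn; exact: leq_maxr.
apply: leq_trans hn; exact: leq_maxl. Qed.

Lemma hcvg_cst l : hcvg (fun _ => l) l.
Proof. by move=> e e0; exists 0%N => n _; rewrite subrr hnorm0. Qed.

Lemma hcvgD u v a b : hcvg u a -> hcvg v b -> hcvg (fun n => u n + v n) (a + b).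
Proof.
move=> hu hv e e0; have e2 : 0 < e / 2 by rewrite divr_gt0.
have [N1 H1] := hu _ e2; have [N2 H2] := hv _ e2; exists (maxn N1 N2) => n hn.
have := H1 n (leq_trans (leq_maxl _ _) hn); have := H2 n (leq_trans (leq_maxr _ _) hn).
have -> : u n + v n - (a + b) = (u n - a) + (v n - b).
  by rewrite opprD addrACA.
have := hnormD (u n - a) (v n - b); lra.
Qed.

Definition addop (T : H -> H) := forall x y, T (x + y) = T x + T y.
Lemma addop0 T : addop T -> T 0 = 0.
Proof. move=> hT; have := hT 0 0; rewrite addr0 => h.
by apply: (addrI (T 0)); rewrite addr0 -h. Qed.
Lemma addopN T : addop T -> forall x, T (- x) = - T x.
Proof. move=> hT x; apply/eqP; rewrite -subr_eq0 opprK -hT addNr addop0 //. Qed.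
Lemma addopB T : addop T -> forall x y, T (x - y) = T x - T y.
Proof. by move=> hT x y; rewrite hT addopN. Qed.

Lemma hcvg_map (T : H -> H) (C : R) u l : addop T ->
  (forall x, hnorm (T x) <= C * hnorm x) -> hcvg u l -> hcvg (fun n => T (u n)) (T l).
Proof.
move=> hT hC hu e e0.
have C1 : 0 < `|C| + 1 by rewrite ltr_pwDr // normr_ge0.
have [N HN] := hu (e / (`|C| + 1)) (divr_gt0 e0 C1); exists N => n hn.
rewrite -addopB //; apply: le_lt_trans (hC _) _.
have := HN n hn; rewrite ltr_pdivlMr // => h.
have := hnorm_ge0 (u n - l); have := ler_norm C; nra.
Qed.

Lemma hcvg_le u l (c : R) : (forall n, hnorm (u n) <= c) -> hcvg u l -> hnorm l <= c.
Proof.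
move=> hb hu; apply: le_small => e e0; have [N HN] := hu e e0.
have := HN N (leqnn N); have := hb N; have := hnorm_tri l (u N) 0.
by rewrite !subr0 hnormB; lra.
Qed.

Definition hcauchy (u : nat -> H) := forall e : R, 0 < e -> exists N, forall m n,
  (N <= m)%N -> (N <= n)%N -> hnorm (u m - u n) < e.

Lemma hcauchy_cvg u : hcauchy u -> exists l, hcvg u l.
Proof. exact: hcomplete. Qed.

Definition hlim (u : nat -> H) : H :=
  ClassicalEpsilon.epsilon (inhabits (0 : H)) (fun l => hcvg u l).
Lemma hlimP u : hcauchy u -> hcvg u (hlim u).
Proof. by move=> /hcauchy_cvg h; apply: ClassicalEpsilon.epsilon_spec. Qed.

End Basic.

Lemma mono_cauchy (R : realType) (a : nat -> R) (b : R) :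
  (forall m n, (m <= n)%N -> a m <= a n) -> (forall n, a n <= b) ->
  forall e, 0 < e -> exists N, forall n, (N <= n)%N -> a n - a N < e.
Proof.
move=> mono bd e e0.
pose E := (fun x : R => exists n, a n = x).
have hs : classical_sets.has_sup E.
  split; first by exists (a 0%N); exists 0%N.
  by exists b => x [n <-].
have [y [N <-] hy] := sup_adherent e0 hs.
exists N => n hn.
have : a n <= sup E by apply: sup_upper_bound => //; exists n.
lra.
Qed.

Section Ops.
Variables (R : realType) (H : hilbert R).
Local Notation ip := (@hinner R H).
Variables (V Vs X : H -> H) (B CX : R).
Hypothesis hVa : addop V.
Hypothesis hViso : forall x, hnorm (V x) = hnorm x.
Hypothesis hadj : forall x y, ip (V x) y = ip x (Vs y).
Hypothesis hpure : forall x (e : R), 0 < e -> exists N, forall n, (N <= n)%N ->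
     hnorm (iter n Vs x) < e.
Hypothesis hXa : addop X.
Hypothesis hXb : forall x, hnorm (X x) <= CX * hnorm x.

Lemma ip_ext u v : (forall z, ip z u = ip z v) -> u = v.
Proof.
move=> h; apply/eqP; rewrite -subr_eq0; apply/eqP/hinner_eq0.
by rewrite ip_subr h subrr.
Qed.

Lemma adjr x y : ip x (V y) = ip (Vs x) y.
Proof. by rewrite hinnerC hadj -hinnerC. Qed.
Lemma adjl z y : ip z (Vs y) = ip (V z) y.
Proof. by rewrite hadj. Qed.

Lemma Vs_add : addop Vs.
Proof. move=> x y; apply: ip_ext => z; by rewrite ip_addr !adjl ip_addr. Qed.
Lemma Vs_scale (a : R[i]) x : Vs (a *: x) = a *: Vs x.
Proof. apply: ip_ext => z; by rewrite !ip_scaler !adjl ip_scaler. Qed.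

Lemma nsqV x : nsq (V x) = nsq x.
Proof. by rewrite -!hnorm_sq hViso. Qed.

Lemma Vs_contr y : hnorm (Vs y) <= hnorm y.
Proof.
have h1 : nsq (Vs y) = complex.Re (ip (V (Vs y)) y) by rewrite /nsq adjl.
have := CS_Re (V (Vs y)) y; rewrite -h1 hViso -hnorm_sq.
have := hnorm_ge0 (Vs y); have := hnorm_ge0 y; nra.
Qed.

Lemma VsV x : Vs (V x) = x.
Proof.
apply/eqP; rewrite -subr_eq0; apply/eqP/nsq_eq0.
have h1 : complex.Re (ip (Vs (V x)) x) = nsq x.
  by rewrite hinnerC ReJ adjl; exact: nsqV.
have h2 : nsq (Vs (V x)) <= nsq x.
  rewrite -!hnorm_sq -(hViso x) lerXn2r ?nnegrE ?hnorm_ge0 //; exact: Vs_contr.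
have := nsq_ge0 (Vs (V x) - x); rewrite nsqB h1; lra.
Qed.

Lemma iter_addop (T : H -> H) n : addop T -> addop (iter n T).
Proof. move=> hT; elim: n => [//|n IH] x y /=; by rewrite IH hT. Qed.
Lemma iterV_norm n x : hnorm (iter n V x) = hnorm x.
Proof. by elim: n => //= n IH; rewrite hViso. Qed.
Lemma iterVs_contr n x : hnorm (iter n Vs x) <= hnorm x.
Proof. elim: n => //= n IH; exact: le_trans (Vs_contr _) IH. Qed.
Lemma iter_scale (T : H -> H) n : (forall (a : R[i]) x, T (a *: x) = a *: T x) ->
  forall (a : R[i]) x, iter n T (a *: x) = a *: iter n T x.
Proof. move=> hT a x; elim: n => //= n ->; exact: hT. Qed.

Lemma adj_iter n x y : ip (iter n V x) y = ip x (iter n Vs y).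
Proof. elim: n x => // n IH x; by rewrite iterSr IH hadj. Qed.

Lemma VsVn m x : iter m Vs (iter m V x) = x.
Proof. elim: m => // m IH; by rewrite iterSr iterS VsV IH. Qed.
Lemma VsVn_le m n x : (m <= n)%N -> iter m Vs (iter n V x) = iter (n - m) V x.
Proof. move=> hmn; by rewrite -{1}(subnKC hmn) iterD VsVn. Qed.
Lemma VsVn_ge m n x : (n <= m)%N -> iter m Vs (iter n V x) = iter (m - n) Vs x.
Proof. move=> hmn; by rewrite -{1}(subnK hmn) iterD VsVn. Qed.

Lemma Vn_add n : addop (iter n V). Proof. exact: iter_addop. Qed.
Lemma Vsn_add n : addop (iter n Vs). Proof. exact: iter_addop Vs_add. Qed.


Definition P M x := iter M V (iter M Vs x).
Definition Q M x := x - P M x.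

Lemma P_add M : addop (P M).
Proof. by move=> x y; rewrite /P Vsn_add Vn_add. Qed.
Lemma Q_add M : addop (Q M).
Proof. by move=> x y; rewrite /Q P_add opprD addrACA. Qed.
Lemma Vs_scale_iter n (a : R[i]) x : iter n Vs (a *: x) = a *: iter n Vs x.
Proof. move: a x; apply: iter_scale; exact: Vs_scale. Qed.
Hypothesis hVz : forall (a : R[i]) x, V (a *: x) = a *: V x.
Lemma hVz_iter n (a : R[i]) x :
  iter n V (a *: x) = a *: iter n V x.
Proof. move: a x; apply: iter_scale; exact: hVz. Qed.

Lemma q1 M k y : (M <= k)%N -> Q M (iter k V y) = 0.
Proof.
move=> hk; rewrite /Q /P VsVn_le // -iterD subnKC // subrr //.
Qed.
Lemma q2 M k x : (M <= k)%N -> iter k Vs (Q M x) = 0.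
Proof.
move=> hk; rewrite /Q /P addopB; last exact: Vsn_add.
by rewrite VsVn_ge // -iterD subnK // subrr.
Qed.
Lemma q3 K K' x : (K <= K')%N -> Q K (Q K' x) = Q K x.
Proof. move=> hk; rewrite [Q K' x]/Q (addopB (Q_add K)) /P q1 ?subr0 //. Qed.
Lemma PQ M x : P M x = x - Q M x.
Proof. by rewrite /Q opprB addrC subrK. Qed.
Lemma nsq_QP M x : nsq x = nsq (Q M x) + nsq (P M x).
Proof.
have e : x = Q M x + P M x by rewrite /Q subrK.
rewrite {1}e nsqD.
have -> : ip (Q M x) (P M x) = 0.
  by rewrite /P hinnerC adj_iter q2 // ip0r raddf0.
by rewrite /= mulr0 addr0.
Qed.
Lemma hnormQ M x : hnorm (Q M x) <= hnorm x.
Proof.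
have := nsq_QP M x; rewrite -!hnorm_sq.
have := hnorm_ge0 x; have := hnorm_ge0 (Q M x); have := sqr_ge0 (hnorm (P M x)).
nra.
Qed.
Lemma hnormP M x : hnorm (P M x) = hnorm (iter M Vs x).
Proof. by rewrite /P iterV_norm. Qed.
Lemma q6 K z : Vs (Q K.+1 z) = Q K (Vs z).
Proof.
rewrite /Q /P addopB; last exact: Vs_add.
by rewrite iterS VsV iterSr.
Qed.
Lemma q5 x : hcvg (fun K => Q K x) x.
Proof.
move=> e e0; have [N HN] := hpure x e0; exists N => n hn.
by rewrite /Q addrAC subrr add0r hnormN hnormP; exact: HN.
Qed.


Hypothesis hXz : forall (a : R[i]) x, X (a *: x) = a *: X x.

Definition term j x := iter j.+1 V (X (iter j V x)) - iter j Vs (X (iter j.+1 Vs x)).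
Definition S n x := \sum_(j < n.+1) term j x.

Lemma S_rec n x : S n.+1 x = S n x + term n.+1 x.
Proof. by rewrite /S big_ord_recr. Qed.
Lemma S0 x : S 0 x = term 0 x.
Proof. by rewrite /S big_ord1. Qed.

Lemma term_add j : addop (term j).
Proof.
move=> x y; rewrite /term Vn_add hXa Vn_add Vsn_add hXa Vsn_add.
by rewrite opprD addrACA.
Qed.
Lemma term_scale j (a : R[i]) x : term j (a *: x) = a *: term j x.
Proof.
rewrite /term hVz_iter hXz hVz_iter Vs_scale_iter hXz Vs_scale_iter.
by rewrite scalerBr.
Qed.
Lemma S_add n : addop (S n).
Proof.
elim: n => [|n IH] x y; first by rewrite !S0 term_add.
by rewrite !S_rec IH term_add addrACA.
Qed.
Lemma S_scale n (a : R[i]) x : S n (a *: x) = a *: S n x.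
Proof.
elim: n => [|n IH]; first by rewrite !S0 term_scale.
rewrite !S_rec IH term_scale. by rewrite -scalerDr. Qed.

Lemma s1 K M y d : Q K (S (maxn K M + d) (Q M y)) = Q K (S (maxn K M) (Q M y)).
Proof.
elim: d => [|d IH]; first by rewrite addn0.
rewrite addnS S_rec (Q_add K) IH /term (addopB (Q_add K)) q1; last first.
  lia.
rewrite q2; last first.
  lia.
by rewrite (addop0 hXa) (addop0 (Vsn_add _)) (addop0 (Q_add K)) subr0 addr0.
Qed.

Definition A j x := iter j V (X (iter j V x)).
Definition C j x := iter j Vs (X (iter j Vs x)).

Lemma dterm j x : Vs (term j x) - term j (V x) = (A j x - A j.+1 x) + (C j x - C j.+1 x).
Proof.
rewrite /term /A /C (addopB Vs_add) iterS VsV -iterSr.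
rewrite [iter j.+1 Vs (V x)]iterSr VsV.
rewrite -[Vs (iter j Vs _)]/(iter j.+1 Vs _).
rewrite opprB.
set a := iter j V _; set b := iter j.+1 Vs _; set c := iter j.+1 V _; set d := iter j Vs _.
by rewrite addrACA [in RHS]addrACA (addrC (- c)).
Qed.

Lemma tele (a b c d e f : H) :
  (a - b + (c - d)) + ((b - e) + (d - f)) = (a - e) + (c - f).
Proof. have h (x y z : H) : x - y + (y - z) = x - z by rewrite addrA subrK.
by rewrite addrACA !h. Qed.

Lemma s2 n x : Vs (S n x) - S n (V x) = (A 0 x - A n.+1 x) + (C 0 x - C n.+1 x).
Proof.
elim: n => [|n IH]; first by rewrite !S0 dterm.
by rewrite !S_rec Vs_add opprD addrACA IH dterm tele.
Qed.


Hypothesis hB : 0 < B.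
Hypothesis hS : forall n x, hnorm (S n x) <= B * hnorm x.

Lemma hcvgN (u : nat -> H) l : hcvg u l -> hcvg (fun n => - u n) (- l).
Proof.
move=> h; apply: (@hcvg_map _ _ (fun z => - z) 1) => //.
- by move=> a b; rewrite opprD.
- by move=> z; rewrite hnormN mul1r.
Qed.
Lemma hcvgB (u v : nat -> H) a b : hcvg u a -> hcvg v b -> hcvg (fun n => u n - v n) (a - b).
Proof. by move=> hu hv; apply: hcvgD => //; apply: hcvgN. Qed.

Lemma split_x M x : x = Q M x + P M x.
Proof. by rewrite /Q subrK. Qed.

Lemma c_cauchy K x : hcauchy (fun n => Q K (S n x)).
Proof.
move=> e e0.
have e1 : 0 < e / (B + B) by rewrite divr_gt0 // addr_gt0.
have [M HM] := hpure x e1.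
set L := maxn K M.
have key : forall p, (L <= p)%N ->
    Q K (S p x) = Q K (S L (Q M x)) + Q K (S p (P M x)).
  move=> p hp; rewrite {1}(split_x M x) S_add Q_add.
  by rewrite -(subnKC hp) s1.
exists L => m n hm hn.
rewrite (key m hm) (key n hn) opprD addrACA subrr add0r.
apply: le_lt_trans (hnormB_le _ _) _.
have h1 := le_trans (hnormQ K (S m (P M x))) (hS m (P M x)).
have h2 := le_trans (hnormQ K (S n (P M x))) (hS n (P M x)).
rewrite hnormP in h1 h2.
have := HM M (leqnn M); rewrite ltr_pdivlMr ?addr_gt0 // => h3.
have := hnorm_ge0 (iter M Vs x).
nra.
Qed.

Definition cK K x := hlim (fun n => Q K (S n x)).
Lemma c_cvg K x : hcvg (fun n => Q K (S n x)) (cK K x).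
Proof. exact/hlimP/c_cauchy. Qed.

Lemma scale_add (a : R[i]) : addop (fun z : H => a *: z).
Proof. by move=> y z; rewrite scalerDr. Qed.
Lemma scale_bd (a : R[i]) (z : H) :
  hnorm (a *: z) <= Num.sqrt (complex.Re a ^+ 2 + complex.Im a ^+ 2) * hnorm z.
Proof. by rewrite hnormZ. Qed.

Lemma c_add K : addop (cK K).
Proof.
move=> x y; apply: (hcvg_unique (c_cvg K (x + y))).
apply: hcvg_ev (hcvgD (c_cvg K x) (c_cvg K y)).
by exists 0%N => n _; rewrite S_add Q_add.
Qed.
Lemma Q_scale M (a : R[i]) x : Q M (a *: x) = a *: Q M x.
Proof. by rewrite /Q /P Vs_scale_iter hVz_iter scalerBr. Qed.
Lemma c_scale K (a : R[i]) x : cK K (a *: x) = a *: cK K x.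
Proof.
apply: (hcvg_unique (c_cvg K (a *: x))).
apply: hcvg_ev (hcvg_map (scale_add a) (scale_bd a) (c_cvg K x)).
by exists 0%N => n _; rewrite S_scale Q_scale.
Qed.
Lemma c_bd K x : hnorm (cK K x) <= B * hnorm x.
Proof.
apply: hcvg_le (c_cvg K x) => n.
exact: le_trans (hnormQ _ _) (hS _ _).
Qed.
Lemma hnormQ1 K z : hnorm (Q K z) <= 1 * hnorm z.
Proof. by rewrite mul1r hnormQ. Qed.
Lemma c_Q K K' x : (K <= K')%N -> Q K (cK K' x) = cK K x.
Proof.
move=> hk; apply: (hcvg_unique (hcvg_map (Q_add K) (hnormQ1 K) (c_cvg K' x))).
apply: hcvg_ev (c_cvg K x).
by exists 0%N => n _; rewrite q3.
Qed.
Lemma c_nsq K K' x : (K <= K')%N ->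
  nsq (cK K' x) = nsq (cK K x) + nsq (cK K' x - cK K x).
Proof. move=> hk; by rewrite (nsq_QP K (cK K' x)) PQ c_Q. Qed.

Lemma W_cauchy x : hcauchy (fun K => cK K x).
Proof.
move=> e e0.
pose a K := nsq (cK K x).
have mono : forall m n, (m <= n)%N -> a m <= a n.
  by move=> m n hmn; rewrite /a (c_nsq x hmn) lerDl nsq_ge0.
have bd : forall n, a n <= (B * hnorm x) ^+ 2.
  move=> n; rewrite /a -hnorm_sq lerXn2r ?nnegrE ?hnorm_ge0 ?c_bd //.
  by rewrite mulr_ge0 ?hnorm_ge0 // ltW.
have e4 : 0 < (e / 2) ^+ 2 by rewrite exprn_gt0 // divr_gt0.
have [N HN] := mono_cauchy mono bd e4.
have small : forall m, (N <= m)%N -> hnorm (cK m x - cK N x) < e / 2.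
  move=> m hm; have := HN m hm; rewrite /a (c_nsq x hm) addrAC subrr add0r.
  rewrite -hnorm_sq => h.
  have := hnorm_ge0 (cK m x - cK N x); have : 0 < e / 2 by rewrite divr_gt0.
  nra.
exists N => m n hm hn.
apply: le_lt_trans (hnorm_tri _ (cK N x) _) _.
have := small m hm; have := small n hn; rewrite (hnormB (cK N x)); lra.
Qed.

Definition W x := hlim (fun K => cK K x).
Lemma W_cvg x : hcvg (fun K => cK K x) (W x).
Proof. exact/hlimP/W_cauchy. Qed.
Lemma W_add : addop W.
Proof.
move=> x y; apply: (hcvg_unique (W_cvg (x + y))).
apply: hcvg_ev (hcvgD (W_cvg x) (W_cvg y)).
by exists 0%N => n _; rewrite c_add.
Qed.
Lemma W_scale (a : R[i]) x : W (a *: x) = a *: W x.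
Proof.
apply: (hcvg_unique (W_cvg (a *: x))).
apply: hcvg_ev (hcvg_map (scale_add a) (scale_bd a) (W_cvg x)).
by exists 0%N => n _; rewrite c_scale.
Qed.
Lemma W_bd x : hnorm (W x) <= B * hnorm x.
Proof. by apply: hcvg_le (W_cvg x) => n; exact: c_bd. Qed.
Lemma W_Q K x : Q K (W x) = cK K x.
Proof.
apply: (hcvg_unique (hcvg_map (Q_add K) (hnormQ1 K) (W_cvg x))).
apply: hcvg_ev (hcvg_cst (cK K x)).
by exists K => n hn; rewrite c_Q.
Qed.


Lemma Vs_bd1 z : hnorm (Vs z) <= 1 * hnorm z.
Proof. by rewrite mul1r Vs_contr. Qed.

Lemma QC_cvg0 K x : hcvg (fun n => Q K (C n.+1 x)) 0.
Proof.
move=> e e0.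
have C1 : 0 < `|CX| + 1 by rewrite ltr_pwDr // normr_ge0.
have [N HN] := hpure x (divr_gt0 e0 C1).
exists N => n hn; rewrite subr0.
apply: le_lt_trans (hnormQ _ _) _.
apply: le_lt_trans (iterVs_contr _ _) _.
apply: le_lt_trans (hXb _) _.
have := HN n.+1 (leqW hn); rewrite ltr_pdivlMr // => h.
have := hnorm_ge0 (iter n.+1 Vs x); have := ler_norm CX; nra.
Qed.

Lemma W_eq x : Vs (W x) - W (V x) = X x + X x.
Proof.
apply/eqP; rewrite -subr_eq0; apply/eqP.
set u := _ - _ - _.
have hQ : forall K, Q K u = 0.
  move=> K.
  rewrite /u (addopB (Q_add K)) (addopB (Q_add K)) -q6 !W_Q.
  have h1 := hcvgB (hcvg_map Vs_add Vs_bd1 (c_cvg K.+1 x)) (c_cvg K (V x)).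
  have h2 := hcvgB (hcvg_cst (Q K (X x + X x))) (QC_cvg0 K x).
  rewrite subr0 in h2.
  rewrite (hcvg_unique h1 (hcvg_ev _ h2)) ?subrr //.
  exists K => n hn.
  rewrite q6 -[in RHS](addopB (Q_add K)) s2.
  have -> : A 0 x - A n.+1 x + (C 0 x - C n.+1 x) = X x + X x - C n.+1 x - A n.+1 x.
    by rewrite /A /C /= addrAC addrA.
  rewrite (addopB (Q_add K) _ (A n.+1 x)) /A q1 ?subr0; last exact: leqW.
  by rewrite !(addopB (Q_add K)) (Q_add K).
apply: (hcvg_unique (q5 u)); apply: hcvg_ev (hcvg_cst 0).
by exists 0%N => n _; rewrite hQ.
Qed.

Definition Zop x : H := (2%:R^-1 : R[i]) *: W x.

Lemma main_sec : exists Z : H -> H, bounded_op Z /\ forall x, X x = Vs (Z x) - Z (V x).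
Proof.
exists Zop; split; last first.
  move=> x; rewrite /Zop Vs_scale -scalerBr W_eq.
  have -> : X x + X x = (2%:R : R[i]) *: X x by rewrite scaler_nat mulr2n.
  by rewrite scalerA mulVf ?scale1r // pnatr_eq0.
split; first by move=> x y; rewrite /Zop W_add scalerDr.
split; first by move=> a x; rewrite /Zop W_scale !scalerA mulrC.
exists (Num.sqrt (complex.Re (2%:R^-1 : R[i]) ^+ 2 + complex.Im (2%:R^-1 : R[i]) ^+ 2) * B).
move=> x; rewrite /Zop hnormZ -mulrA ler_wpM2l ?sqrtr_ge0 //; exact: W_bd.
Qed.

End Ops.

Theorem proposition2p5 (R : realType) (H : hilbert R) (V Vs X : H -> H) :
  bounded_op V -> is_adjoint V Vs -> pure_isometry V Vs ->
  bounded_op X ->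
  (exists M : R, forall (n : nat) (x : H),
     hnorm (\sum_(j < n.+1)
              (iter j.+1 V (X (iter j V x)) - iter j Vs (X (iter j.+1 Vs x))))
       <= M * hnorm x) ->
  exists Z : H -> H, bounded_op Z /\ forall x : H, X x = Vs (Z x) - Z (V x).
Proof.
move=> [Va [Vz _]] adj [iso pure] [Xa [Xz [CXc Xb]]] [M hM].
apply: (@main_sec R H V Vs X (`|M| + 1) CXc) => //.
- by rewrite ltr_pwDr // normr_ge0.
- move=> n x; apply: le_trans (hM n x) _.
  rewrite ler_wpM2r ?hnorm_ge0 //; have := ler_norm M; lra.
Qed.
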